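(* Let $\mathfrak K$ be a diagram category and let $\mathcal G(\mathfrak K)$ be the graph whose vertex set is $\bigsqcup_{D\in\mathfrak K}\mathcal V(D)$ and whose edges are of two types: I0-edges $v\,f_*(v)$ for every elementary morphism $f\colon D\to D'$ and $v\in dom(f_* )$, and I2-edges $v_1v_2$ for every pair of crossings $v_1,v_2$ of a diagram $D$ to which a decreasing second Reidemeister move can be applied; let $\mathcal G_0(\mathfrak K)$ be obtained by deleting all I2-edges. Then: (1) the coefficient set of the universal index $\iota^u$ can be identified with the set of connected components of $\mathcal G(\mathfrak K)$, $\iota^u$ mapping a crossing to its component; (2) the coefficient set of the universal trait $\theta^u$ can be identified with the set of connected components of $\mathcal G_0(\mathfrak K)$, $\theta^u$ mapping a crossing to its component; (3) for crossings $v,v'$, $\sigma^u(v)=\sigma^u(v')$ iff $v$ and $v'$ are connected in $\mathcal G(\mathfrak K)$ by a path with an even number of I2-edges, and $\sigma^u(v)^\ast=\sigma^u(v')$ iff they are connected by a path with an odd number of I2-edges, where $\sigma^u$ is the universal signed index.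
   Context: A diagram category $\mathfrak K$ is either the category of diagrams of a fixed oriented tangle with numbered components (virtual, flat, free, in a fixed surface, flat in a fixed surface, or classical), or a union of such categories over all tangles of a given type. Morphisms are formal compositions of elementary morphisms: isotopies, diagram isomorphisms, Reidemeister moves. $\mathcal V(D)$ is the set of crossings; for a morphism $f$, $f_*\colon dom(f_* )\to im(f_* )$ is the bijection between crossings surviving $f$ and their images. A trait with coefficients in $\Theta$ is a map $\theta\colon\bigsqcup_D\mathcal V(D)\to\Theta$ with (I0) $\theta(f_*(v))=\theta(v)$ for elementary $f$, $v\in dom(f_* )$. An index is a trait with (I2) $\iota(v_1)=\iota(v_2)$ whenever a decreasing second Reidemeister move applies to $v_1,v_2$. A signed index with coefficients in a set $S$ with involution $\ast$ is a trait with (I2+) $\sigma(v_1)=\sigma(v_2)^\ast$ for such pairs. The universal trait/index is one through which every trait/index factors uniquely via a map of coefficient sets; the universal signed index $\sigma^u$ is one through which every signed index factors uniquely via an involution-commuting map. *)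

(* Defs.v *)
(* Abstract presentation of a diagram category: only the data
   the proposition depends on (crossings, the partial bijections f_* of
   elementary morphisms, and the pairs of crossings admitting a decreasing
   second Reidemeister move) is recorded. *)
Set Implicit Arguments.
Unset Strict Implicit.

Record DiagCat := {
  diagram : Type;
  crossing : diagram -> Type;
  elem : Type;
  esrc : elem -> diagram;
  etgt : elem -> diagram;
  (* f_* : dom(f_* ) -> im(f_* ), as a partial map V(D) -> V(D') *)
  fstar : forall f : elem, crossing (esrc f) -> option (crossing (etgt f));
  (* r2dec D v1 v2 : a decreasing second Reidemeister move applies to v1,v2 *)
  r2dec : forall D : diagram, crossing D -> crossing D -> Prop
}.

Arguments crossing {d} D.
Arguments elem d : assert.
Arguments esrc {d} f.
Arguments etgt {d} f.
Arguments fstar {d} f v.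
Arguments r2dec {d} D v1 v2.

Definition Xing (K : DiagCat) : Type := {D : diagram K & crossing D}.

Definition I0edge (K : DiagCat) (x y : Xing K) : Prop :=
  exists (f : elem K) (v : crossing (esrc f)) (w : crossing (etgt f)),
    fstar f v = Some w /\
    x = existT _ (esrc f) v /\ y = existT _ (etgt f) w.

Definition I2edge (K : DiagCat) (x y : Xing K) : Prop :=
  exists (D : diagram K) (v1 v2 : crossing D),
    r2dec D v1 v2 /\ x = existT _ D v1 /\ y = existT _ D v2.

(* ppath x y b : there is a path from x to y in G(K) (undirected edges)
   whose number of I2-edges has parity b (false = even, true = odd). *)
Inductive ppath (K : DiagCat) : Xing K -> Xing K -> bool -> Prop :=
| pp_refl x : ppath x x false
| pp_I0 x y z b : (I0edge x y \/ I0edge y x) -> ppath y z b -> ppath x z b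
| pp_I2 x y z b : (I2edge x y \/ I2edge y x) -> ppath y z b -> ppath x z (negb b).

Definition connG (K : DiagCat) (x y : Xing K) : Prop := exists b, ppath x y b.

Inductive connG0 (K : DiagCat) : Xing K -> Xing K -> Prop :=
| c0_refl x : connG0 x x
| c0_I0 x y z : (I0edge x y \/ I0edge y x) -> connG0 y z -> connG0 x z.

Definition is_trait (K : DiagCat) (Th : Type) (th : Xing K -> Th) : Prop :=
  forall (f : elem K) (v : crossing (esrc f)) (w : crossing (etgt f)),
    fstar f v = Some w ->
    th (existT _ (esrc f) v) = th (existT _ (etgt f) w).

Definition is_index (K : DiagCat) (Th : Type) (th : Xing K -> Th) : Prop :=
  is_trait th /\
  forall (D : diagram K) (v1 v2 : crossing D), r2dec D v1 v2 ->
    th (existT _ D v1) = th (existT _ D v2).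

Definition is_signed_index (K : DiagCat) (S : Type) (star : S -> S)
  (sg : Xing K -> S) : Prop :=
  (forall s, star (star s) = s) /\
  is_trait sg /\
  forall (D : diagram K) (v1 v2 : crossing D), r2dec D v1 v2 ->
    sg (existT _ D v1) = star (sg (existT _ D v2)).

Definition is_universal_trait (K : DiagCat) (Th : Type) (th : Xing K -> Th)
  : Prop :=
  is_trait th /\
  forall (Th' : Type) (th' : Xing K -> Th'), is_trait th' ->
    exists! g : Th -> Th', forall x, th' x = g (th x).

Definition is_universal_index (K : DiagCat) (Th : Type) (th : Xing K -> Th)
  : Prop :=
  is_index th /\
  forall (Th' : Type) (th' : Xing K -> Th'), is_index th' ->
    exists! g : Th -> Th', forall x, th' x = g (th x).

Definition is_universal_signed_index (K : DiagCat) (S : Type) (star : S -> S)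
  (sg : Xing K -> S) : Prop :=
  is_signed_index star sg /\
  forall (S' : Type) (star' : S' -> S') (sg' : Xing K -> S'),
    is_signed_index star' sg' ->
    exists! g : S -> S',
      (forall s, g (star s) = star' (g s)) /\ (forall x, sg' x = g (sg x)).

(* Main.v *)
Require Import Defs.
From Stdlib Require Import Bool ClassicalEpsilon FunctionalExtensionality PropExtensionality ProofIrrelevance.
Set Implicit Arguments.
Unset Strict Implicit.

Definition Q (A : Type) (R : A -> A -> Prop) : Type :=
  {P : A -> Prop | exists a, P = R a}.
Definition cls (A : Type) (R : A -> A -> Prop) (a : A) : Q R :=
  exist _ (R a) (ex_intro _ a eq_refl).

Lemma cls_surj (A : Type) (R : A -> A -> Prop) (q : Q R) : exists a, cls R a = q.
Proof.
  destruct q as [P [a Ha]]. exists a. subst P. unfold cls. f_equal.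
Qed.

Lemma Q_ext (A : Type) (R : A -> A -> Prop) (q1 q2 : Q R) :
  proj1_sig q1 = proj1_sig q2 -> q1 = q2.
Proof. destruct q1, q2; simpl; intro; subst; f_equal; apply proof_irrelevance. Qed.

Lemma cls_eq (A : Type) (R : A -> A -> Prop)
  (Hr : forall a, R a a) (Hs : forall a b, R a b -> R b a)
  (Ht : forall a b c, R a b -> R b c -> R a c) a b :
  cls R a = cls R b <-> R a b.
Proof.
  split.
  - intro H. assert (E : R a = R b) by exact (f_equal (@proj1_sig _ _) H).
    rewrite E. apply Hr.
  - intro H. assert (E : R a = R b).
    { apply functional_extensionality; intro c; apply propositional_extensionality.
      split; intro Hc; eauto. }
    apply Q_ext. exact E.
Qed.

Definition rep (A : Type) (R : A -> A -> Prop) (q : Q R) : A :=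
  proj1_sig (constructive_indefinite_description _ (cls_surj q)).

Lemma rep_cls (A : Type) (R : A -> A -> Prop) (q : Q R) : cls R (rep q) = q.
Proof. unfold rep. destruct constructive_indefinite_description; simpl; auto. Qed.

Definition lift (A B : Type) (R : A -> A -> Prop) (h : A -> B) (q : Q R) : B :=
  h (rep q).
Arguments lift {A B} R h q.

Lemma lift_cls (A B : Type) (R : A -> A -> Prop)
  (Hr : forall a, R a a) (Hs : forall a b, R a b -> R b a)
  (Ht : forall a b c, R a b -> R b c -> R a c)
  (h : A -> B) (Hh : forall a b, R a b -> h a = h b) a :
  lift R h (cls R a) = h a.
Proof.
  unfold lift. apply Hh. apply (proj1 (cls_eq Hr Hs Ht _ _)). apply rep_cls.
Qed.

Lemma quot_univ (A B : Type) (R : A -> A -> Prop)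
  (Hr : forall a, R a a) (Hs : forall a b, R a b -> R b a)
  (Ht : forall a b c, R a b -> R b c -> R a c)
  (h : A -> B) (Hh : forall a b, R a b -> h a = h b) :
  exists! g : Q R -> B, forall x, h x = g (cls R x).
Proof.
  exists (lift R h). split.
  - intro x. symmetry. apply lift_cls; auto.
  - intros g' Hg'. apply functional_extensionality; intro q.
    destruct (cls_surj q) as [a <-]. rewrite <- Hg'. apply lift_cls; auto.
Qed.

Lemma ppath_trans (K : DiagCat) (x y z : Xing K) a b :
  ppath x y a -> ppath y z b -> ppath x z (xorb a b).
Proof.
  intro H; revert z b; induction H; intros z' b' H'.
  - exact H'.
  - eapply pp_I0; eauto.
  - replace (xorb (negb b) b') with (negb (xorb b b')) by (destruct b, b'; reflexivity).
    eapply pp_I2; eauto.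
Qed.

Lemma ppath_sym (K : DiagCat) (x y : Xing K) b : ppath x y b -> ppath y x b.
Proof.
  induction 1.
  - constructor.
  - replace b with (xorb b false) by (destruct b; reflexivity).
    eapply ppath_trans; [eassumption|]. eapply pp_I0; [|constructor].
    destruct H; auto.
  - replace (negb b) with (xorb b true) by (destruct b; reflexivity).
    eapply ppath_trans; [eassumption|].
    change true with (negb false). eapply pp_I2; [|constructor].
    destruct H; auto.
Qed.

Lemma connG0_trans (K : DiagCat) (x y z : Xing K) :
  connG0 x y -> connG0 y z -> connG0 x z.
Proof. induction 1; intros; auto. eapply c0_I0; eauto. Qed.

Lemma connG0_sym (K : DiagCat) (x y : Xing K) : connG0 x y -> connG0 y x.
Proof.
  induction 1. constructor. eapply connG0_trans; [eassumption|].
  eapply c0_I0; [|constructor]. destruct H; auto.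
Qed.

Lemma trait_I0 (K : DiagCat) Th (th : Xing K -> Th) : is_trait th ->
  forall x y, I0edge x y -> th x = th y.
Proof. intros Ht x y (f & v & w & E & -> & ->). apply Ht; auto. Qed.

Lemma trait_connG0 (K : DiagCat) Th (th : Xing K -> Th) : is_trait th ->
  forall x y, connG0 x y -> th x = th y.
Proof.
  intros Ht x y H; induction H; auto.
  destruct H as [H|H]; apply (trait_I0 Ht) in H; congruence.
Qed.

Lemma index_ppath (K : DiagCat) Th (th : Xing K -> Th) : is_index th ->
  forall x y b, ppath x y b -> th x = th y.
Proof.
  intros [Ht Hi] x y b H; induction H; auto.
  - destruct H as [H|H]; apply (trait_I0 Ht) in H; congruence.
  - destruct H as [(D & v1 & v2 & E & -> & ->)|(D & v1 & v2 & E & -> & ->)];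
      apply Hi in E; congruence.
Qed.

Lemma signed_ppath (K : DiagCat) S (star : S -> S) (sg : Xing K -> S) :
  is_signed_index star sg ->
  forall x y b, ppath x y b -> sg y = if b then star (sg x) else sg x.
Proof.
  intros [Hinv [Ht Hi]] x y b H; induction H; auto.
  - destruct H as [H|H]; apply (trait_I0 Ht) in H; rewrite IHppath; destruct b; congruence.
  - assert (E : sg y = star (sg x)).
    { destruct H as [(D & v1 & v2 & E & -> & ->)|(D & v1 & v2 & E & -> & ->)];
        apply Hi in E; rewrite E; auto. }
    rewrite IHppath, E. destruct b; simpl; auto.
Qed.

Lemma connG_refl (K : DiagCat) (x : Xing K) : connG x x.
Proof. exists false; constructor. Qed.
Lemma connG_sym (K : DiagCat) (x y : Xing K) : connG x y -> connG y x.
Proof. intros [b H]; exists b; apply ppath_sym; auto. Qed.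
Lemma connG_trans (K : DiagCat) (x y z : Xing K) : connG x y -> connG y z -> connG x z.
Proof. intros [a H] [b H']; exists (xorb a b); eapply ppath_trans; eauto. Qed.

Lemma univ_surj (A Th : Type) (th : A -> Th)
  (U : exists! g : Th -> Prop, forall x, True = g (th x)) :
  forall t, exists x, th x = t.
Proof.
  destruct U as [g0 [_ Hu]].
  assert (E1 : g0 = fun _ => True) by (apply Hu; auto).
  assert (E2 : g0 = fun t => exists x, th x = t).
  { apply Hu. intro x. apply propositional_extensionality. split; eauto. }
  intro t. pose proof (f_equal (fun g => g t) (eq_trans (eq_sym E1) E2)) as H.
  simpl in H. rewrite <- H. exact I.
Qed.

Definition sR (K : DiagCat) (p q : Xing K * bool) : Prop :=
  ppath (fst p) (fst q) (xorb (snd p) (snd q)).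

Lemma sR_refl K (p : Xing K * bool) : sR p p.
Proof. unfold sR; rewrite xorb_nilpotent; constructor. Qed.
Lemma sR_sym K (p q : Xing K * bool) : sR p q -> sR q p.
Proof. unfold sR; intro H; rewrite xorb_comm; apply ppath_sym; auto. Qed.
Lemma sR_trans K (p q r : Xing K * bool) : sR p q -> sR q r -> sR p r.
Proof.
  unfold sR; intros H H'. pose proof (ppath_trans H H') as H2.
  replace (xorb (snd p) (snd r)) with (xorb (xorb (snd p) (snd q)) (xorb (snd q) (snd r)))
    by (destruct (snd p), (snd q), (snd r); reflexivity). exact H2.
Qed.

Definition flip K (p : Xing K * bool) : Q (@sR K) := cls (@sR K) (fst p, negb (snd p)).
Lemma flip_ok K (p q : Xing K * bool) : sR p q -> flip p = flip q.
Proof.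
  intro H. unfold flip. apply cls_eq; [apply sR_refl|apply sR_sym|apply sR_trans|].
  unfold sR in *; simpl. destruct (snd p), (snd q); exact H.
Qed.
Definition starc K : Q (@sR K) -> Q (@sR K) := lift (@sR K) (@flip K).
Lemma starc_cls K (p : Xing K * bool) : starc (cls (@sR K) p) = cls (@sR K) (fst p, negb (snd p)).
Proof. unfold starc. rewrite lift_cls; [reflexivity|exact (@sR_refl K)|exact (@sR_sym K)|exact (@sR_trans K)|exact (@flip_ok K)]. Qed.
Definition sgc K (x : Xing K) : Q (@sR K) := cls (@sR K) (x, false).

Lemma sgc_signed K : is_signed_index (@starc K) (@sgc K).
Proof.
  split; [|split].
  - intro s. destruct (cls_surj s) as [[x a] <-]. rewrite !starc_cls. simpl.
    rewrite negb_involutive. reflexivity.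
  - intros f v w E. unfold sgc. apply cls_eq; [apply sR_refl|apply sR_sym|apply sR_trans|].
    unfold sR; simpl. eapply pp_I0; [left; exists f, v, w; auto|constructor].
  - intros D v1 v2 E. unfold sgc. rewrite starc_cls. simpl.
    apply cls_eq; [apply sR_refl|apply sR_sym|apply sR_trans|].
    unfold sR; simpl. change true with (negb false).
    eapply pp_I2; [left; exists D, v1, v2; auto|constructor].
Qed.

Lemma lift_cls_sR K B (h : Xing K * bool -> B) (Hh : forall p q, sR p q -> h p = h q) p :
  lift (@sR K) h (cls (@sR K) p) = h p.
Proof. apply lift_cls; [exact (@sR_refl K)|exact (@sR_sym K)|exact (@sR_trans K)|exact Hh]. Qed.

Lemma sgc_univ K : is_universal_signed_index (@starc K) (@sgc K).
Proof.
  split; [apply sgc_signed|].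
  intros S' star' sg' Hs.
  pose proof (signed_ppath Hs) as Hp. destruct Hs as [Hinv _].
  set (h := fun p : Xing K * bool => if snd p then star' (sg' (fst p)) else sg' (fst p)).
  assert (Hh : forall p q, sR p q -> h p = h q).
  { intros [x a] [y b] H. unfold sR in H; simpl in H. apply Hp in H. unfold h; simpl.
    destruct a, b; simpl in *; rewrite H; auto. }
  exists (lift (@sR K) h). split; [split|].
  - intro s. destruct (cls_surj s) as [[x a] <-]. rewrite starc_cls.
    rewrite !(lift_cls_sR Hh). unfold h; simpl.
    destruct a; simpl; auto.
  - intro x. unfold sgc. rewrite (lift_cls_sR Hh). reflexivity.
  - intros g' [Hg1 Hg2]. apply functional_extensionality; intro q.
    destruct (cls_surj q) as [[x a] <-].
    rewrite (lift_cls_sR Hh). unfold h; simpl.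
    destruct a.
    + replace (cls (@sR K) (x, true)) with (starc (sgc x))
        by (unfold sgc; rewrite starc_cls; reflexivity).
      rewrite Hg1, <- Hg2. reflexivity.
    + apply Hg2.
Qed.

Theorem proposition6 (K : DiagCat) :
  (* (1) the universal index exists and its coefficient set is the set of
     connected components of G(K), the index mapping a crossing to its
     component *)
  ((exists (Th : Type) (th : Xing K -> Th), is_universal_index th) /\
   (forall (Th : Type) (th : Xing K -> Th), is_universal_index th ->
      (forall t : Th, exists x, th x = t) /\
      (forall x y, th x = th y <-> connG x y))) /\
  (* (2) same for the universal trait and G_0(K) *)
  ((exists (Th : Type) (th : Xing K -> Th), is_universal_trait th) /\
   (forall (Th : Type) (th : Xing K -> Th), is_universal_trait th ->
      (forall t : Th, exists x, th x = t) /\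
      (forall x y, th x = th y <-> connG0 x y))) /\
  (* (3) universal signed index and parity of I2-edges along paths *)
  ((exists (S : Type) (star : S -> S) (sg : Xing K -> S),
       is_universal_signed_index star sg) /\
   (forall (S : Type) (star : S -> S) (sg : Xing K -> S),
      is_universal_signed_index star sg ->
      forall x y,
        (sg x = sg y <-> ppath x y false) /\
        (star (sg x) = sg y <-> ppath x y true))).
Proof.
  assert (c1_index : is_index (cls (@connG K))).
  { split.
    - intros f v w E. apply cls_eq; [apply connG_refl|apply connG_sym|apply connG_trans|].
      exists false. eapply pp_I0; [left; exists f, v, w; auto|constructor].
    - intros D v1 v2 E. apply cls_eq; [apply connG_refl|apply connG_sym|apply connG_trans|].
      exists true. change true with (negb false).
      eapply pp_I2; [left; exists D, v1, v2; auto|constructor]. }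
  assert (c0_trait : is_trait (cls (@connG0 K))).
  { intros f v w E. apply cls_eq; [apply c0_refl|apply connG0_sym|apply connG0_trans|].
    eapply c0_I0; [left; exists f, v, w; auto|constructor]. }
  split; [split|split; [split|split]].
  - exists (Q (@connG K)), (cls (@connG K)). split; auto.
    intros Th' th' Hi. apply quot_univ; [apply connG_refl|apply connG_sym|apply connG_trans|].
    intros a b [c H]. eapply index_ppath; eauto.
  - intros Th th [Hi Hu]. split.
    + apply univ_surj. apply Hu. split; [intros ? ? ? ?; auto| intros; auto].
    + intros x y. split.
      * intro E. destruct (Hu _ _ c1_index) as [g [Hg _]].
        apply (cls_eq (R := @connG K)); [apply connG_refl|apply connG_sym|apply connG_trans|].
        rewrite !Hg, E. reflexivity.
      * intros [b H]. eapply index_ppath; eauto.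
  - exists (Q (@connG0 K)), (cls (@connG0 K)). split; auto.
    intros Th' th' Hi. apply quot_univ; [apply c0_refl|apply connG0_sym|apply connG0_trans|].
    apply trait_connG0; auto.
  - intros Th th [Hi Hu]. split.
    + apply univ_surj. apply Hu. intros ? ? ? ?; auto.
    + intros x y. split.
      * intro E. destruct (Hu _ _ c0_trait) as [g [Hg _]].
        apply (cls_eq (R := @connG0 K)); [apply c0_refl|apply connG0_sym|apply connG0_trans|].
        rewrite !Hg, E. reflexivity.
      * apply trait_connG0; auto.
  - exists (Q (@sR K)), (@starc K), (@sgc K). apply sgc_univ.
  - intros S star sg [Hs Hu] x y.
    destruct (Hu _ _ _ (sgc_signed K)) as [g [[Hg1 Hg2] _]].
    pose proof (signed_ppath Hs) as Hp. destruct Hs as [Hinv _].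
    split; split.
    + intro E. assert (E' : sgc x = sgc y) by (rewrite !Hg2, E; reflexivity).
      unfold sgc in E'. apply (proj1 (cls_eq (@sR_refl K) (@sR_sym K) (@sR_trans K) _ _)) in E'.
      exact E'.
    + intro H. apply Hp in H. auto.
    + intro E. assert (E' : sgc y = starc (sgc x)) by (rewrite !Hg2, <- E, Hg1; reflexivity).
      unfold sgc in E'. rewrite starc_cls in E'. simpl in E'.
      apply (proj1 (cls_eq (@sR_refl K) (@sR_sym K) (@sR_trans K) _ _)) in E'.
      unfold sR in E'; simpl in E'. apply ppath_sym; exact E'.
    + intro H. apply Hp in H. auto.
Qed.
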